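(* Let $n\ge 2$, $m\ge 0$, $1\le k\le n-1$. Let $(b,e)=(2k,n+k)$ or $(b,e)=(2k-1,n+k-1)$, and let $G$ be the group with presentation $$\langle \alpha,\beta\mid [(\alpha\beta^{n-k+1}\alpha\beta^{-n+k})^{e}(\alpha\beta)^{-b+1}\beta^{-n+k-1}]^{m+1}=\alpha\beta^{n-k+1}\alpha\beta^{-n+k}\rangle.$$ Let $Q$ be any quotient group of $G$ (in particular, the fundamental group of any Dehn surgery on the corresponding knot), with $\alpha,\beta$ also denoting their images in $Q$. For any homomorphism $\Phi:Q\to\mathrm{Homeo}^+(\mathbb{R})$, if $\Phi(\alpha)(t)>t$ for all $t\in\mathbb{R}$, then $\Phi(\beta)(t)\ge t$ for all $t\in\mathbb{R}$.
   Context: $\mathrm{Homeo}^+(\mathbb{R})$ is the group of order-preserving homeomorphisms of $\mathbb{R}$. For $(b,e)=(2k,n+k)$, $G$ is the knot group of the closure of $(\sigma_1\cdots\sigma_{2k})(\sigma_1\cdots\sigma_{2n})^{2n-1+m(2n+1)}$ on $2n+1$ strands; for $(b,e)=(2k-1,n+k-1)$, $G$ is the knot group of the closure of $(\sigma_1\cdots\sigma_{2k-1})(\sigma_1\cdots\sigma_{2n-1})^{2n-2+2mn}$ on $2n$ strands. *)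

(* Defs.v *)
From Stdlib Require Import Reals ZArith.
Open Scope R_scope.

Record Group := {
  carrier :> Type;
  gmul : carrier -> carrier -> carrier;
  gone : carrier;
  ginv : carrier -> carrier;
  gmul_assoc : forall x y z, gmul x (gmul y z) = gmul (gmul x y) z;
  gmul_1l : forall x, gmul gone x = x;
  gmul_1r : forall x, gmul x gone = x;
  gmul_Vl : forall x, gmul (ginv x) x = gone;
  gmul_Vr : forall x, gmul x (ginv x) = gone
}.

Arguments gmul {g}.
Arguments gone {g}.
Arguments ginv {g}.

Fixpoint gnpow {Q : Group} (x : Q) (n : nat) : Q :=
  match n with O => gone | S n' => gmul x (gnpow x n') end.

Definition gzpow {Q : Group} (x : Q) (z : Z) : Q :=
  match z with
  | Z0 => gone
  | Zpos p => gnpow x (Pos.to_nat p)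
  | Zneg p => ginv (gnpow x (Pos.to_nat p))
  end.

Inductive in_gen {Q : Group} (a b : Q) : Q -> Prop :=
  | gen_a : in_gen a b a
  | gen_b : in_gen a b b
  | gen_one : in_gen a b gone
  | gen_mul : forall x y, in_gen a b x -> in_gen a b y -> in_gen a b (gmul x y)
  | gen_inv : forall x, in_gen a b x -> in_gen a b (ginv x).

Definition generated_by {Q : Group} (a b : Q) : Prop := forall x : Q, in_gen a b x.

Definition relU {Q : Group} (a b : Q) (n k : nat) : Q :=
  gmul a (gmul (gzpow b (Z.of_nat n - Z.of_nat k + 1))
    (gmul a (gzpow b (- Z.of_nat n + Z.of_nat k)))).

Definition relW {Q : Group} (a b : Q) (n k bb e : nat) : Q :=
  gmul (gzpow (relU a b n k) (Z.of_nat e))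
    (gmul (gzpow (gmul a b) (- Z.of_nat bb + 1))
      (gzpow b (- Z.of_nat n + Z.of_nat k - 1))).

Definition satisfies_relation {Q : Group} (a b : Q) (n m k bb e : nat) : Prop :=
  gzpow (relW a b n k bb e) (Z.of_nat m + 1) = relU a b n k.

Definition homeo_plus (f : R -> R) : Prop :=
  (forall x y, x < y -> f x < f y) /\ continuity f /\ (forall y, exists x, f x = y).

Definition hom_to_homeo_plus {Q : Group} (Phi : Q -> R -> R) : Prop :=
  (forall q, homeo_plus (Phi q)) /\
  (forall x y t, Phi (gmul x y) t = Phi x (Phi y t)).

(* Main.v *)
Require Import Defs.
From Stdlib Require Import Reals ZArith Lra Lia.
Open Scope R_scope.

Fixpoint it (f : R -> R) (j : nat) (t : R) : R :=
  match j with O => t | S j' => f (it f j' t) end.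

Definition sinc (f : R -> R) := forall x y, x < y -> f x < f y.

Lemma sinc_le f x y : sinc f -> x <= y -> f x <= f y.
Proof. intros H [h|h]; [left; apply H; exact h| right; subst; reflexivity]. Qed.

Lemma sinc_inj f x y : sinc f -> f x = f y -> x = y.
Proof. intros H E. destruct (Rtotal_order x y) as [h|[h|h]]; auto;
  apply H in h; lra. Qed.

Lemma it_sinc f j : sinc f -> sinc (it f j).
Proof. intros H; induction j; intros x y h; simpl; auto. Qed.

Lemma it_add f i j t : it f i (it f j t) = it f (i+j) t.
Proof. induction i; simpl; congruence. Qed.

Lemma it_Sr f j t : it f (S j) t = it f j (f t).
Proof. induction j; simpl in *; auto. rewrite <- IHj. reflexivity. Qed.

Lemma it_ext f g j t : (forall t, f t = g t) -> it f j t = it g j t.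
Proof. intros H; induction j; simpl; congruence. Qed.

Lemma it_mul f i j t : it (it f i) j t = it f (i*j) t.
Proof. induction j; simpl. rewrite Nat.mul_0_r; reflexivity.
  rewrite IHj, it_add. f_equal. lia. Qed.

Lemma it_surj f j : (forall y, exists x, f x = y) -> forall y, exists x, it f j x = y.
Proof. intros H; induction j; intros y; simpl. exists y; reflexivity.
  destruct (H y) as [z Hz]. destruct (IHj z) as [x Hx]. exists x. congruence. Qed.

Lemma it_le f g j t : (forall t, f t <= g t) -> sinc g -> it f j t <= it g j t.
Proof. intros H G; induction j; simpl. lra.
  eapply Rle_trans. apply H. apply sinc_le; auto. Qed.

Lemma Phi_sinc {Q : Group} (Phi : Q -> R -> R) x : hom_to_homeo_plus Phi -> sinc (Phi x).
Proof. intros [H _]. destruct (H x) as [h _]. exact h. Qed.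

Lemma Phi_one {Q : Group} (Phi : Q -> R -> R) t : hom_to_homeo_plus Phi -> Phi gone t = t.
Proof. intros hP. pose proof (proj2 hP gone gone t) as E. rewrite gmul_1l in E.
  apply (sinc_inj (Phi gone)). apply Phi_sinc; auto. symmetry; exact E. Qed.

Lemma Phi_inv {Q : Group} (Phi : Q -> R -> R) x t : hom_to_homeo_plus Phi -> Phi x (Phi (ginv x) t) = t.
Proof. intros hP. rewrite <- (proj2 hP). rewrite gmul_Vr. apply Phi_one; auto. Qed.

Lemma Phi_npow {Q : Group} (Phi : Q -> R -> R) x j t : hom_to_homeo_plus Phi -> Phi (gnpow x j) t = it (Phi x) j t.
Proof. intros hP; induction j; simpl. apply Phi_one; auto. rewrite (proj2 hP). congruence. Qed.

Lemma gzpow_pos {Q : Group} (x : Q) j : gzpow x (Z.of_nat j) = gnpow x j.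
Proof. destruct j; simpl; auto. rewrite SuccNat2Pos.id_succ. reflexivity. Qed.

Lemma Phi_zneg {Q : Group} (Phi : Q -> R -> R) x j t : hom_to_homeo_plus Phi -> it (Phi x) j (Phi (gzpow x (- Z.of_nat j)) t) = t.
Proof. intros hP. destruct j. simpl. apply Phi_one; auto.
  change (- Z.of_nat (S j))%Z with (Zneg (Pos.of_succ_nat j)). unfold gzpow.
  rewrite SuccNat2Pos.id_succ. rewrite <- Phi_npow; auto. apply Phi_inv; auto. Qed.

Theorem mainTheorem11 (n m k bb e : nat)
  (hn : (2 <= n)%nat) (hk1 : (1 <= k)%nat) (hk2 : (k <= n - 1)%nat)
  (hbe : (bb = 2 * k /\ e = n + k)%nat \/ (bb = 2 * k - 1 /\ e = n + k - 1)%nat)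
  (Q : Group) (alpha beta : Q)
  (hgen : generated_by alpha beta)
  (hrel : satisfies_relation alpha beta n m k bb e)
  (Phi : Q -> R -> R) (hPhi : hom_to_homeo_plus Phi)
  (halpha : forall t : R, Phi alpha t > t) :
  forall t : R, Phi beta t >= t.
Proof.
  intros t0.
  set (p := (n - k)%nat). assert (Hp : p = (n - k)%nat) by reflexivity. clearbody p.
  assert (Hbb : (1 <= bb)%nat) by lia.
  assert (He : e = (p + bb)%nat) by lia.
  assert (hm := proj2 hPhi).
  set (A := Phi alpha). set (B := Phi beta).
  assert (sA : sinc A) by (apply Phi_sinc; auto).
  assert (sB : sinc B) by (apply Phi_sinc; auto).
  set (AB := fun t => A (B t)).
  assert (sAB : sinc AB) by (intros x y h; unfold AB; auto).
  set (u := Phi (relU alpha beta n k)).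
  assert (su : sinc u) by (apply Phi_sinc; auto).
  set (Bn := Phi (gzpow beta (- Z.of_nat p))).
  assert (HBn : forall t, it B p (Bn t) = t) by (intro; apply Phi_zneg; auto).
  assert (Hu : forall t, u t = A (it B (S p) (A (Bn t)))).
  { intro t. unfold u, relU. rewrite !hm.
    replace (Z.of_nat n - Z.of_nat k + 1)%Z with (Z.of_nat (S p)) by lia.
    replace (- Z.of_nat n + Z.of_nat k)%Z with (- Z.of_nat p)%Z by lia.
    rewrite gzpow_pos, Phi_npow by auto. reflexivity. }
  assert (HB0 : forall t, B t <= it B (S p) (A (Bn t))).
  { intro t. rewrite <- (HBn t) at 1. change (B (it B p (Bn t))) with (it B (S p) (Bn t)).
    apply sinc_le. apply it_sinc; auto. left; apply halpha. }
  assert (HuB : forall t, B t <= u t).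
  { intro t. rewrite Hu. eapply Rle_trans. apply HB0. left; apply halpha. }
  assert (HuAB : forall t, AB t <= u t).
  { intro t. rewrite Hu. unfold AB. apply sinc_le; auto. }
  set (W := relW alpha beta n k bb e). set (w := Phi W).
  set (ABn := Phi (gzpow (gmul alpha beta) (- Z.of_nat (bb - 1)))).
  set (Bn1 := Phi (gzpow beta (- Z.of_nat (S p)))).
  set (z := fun t => ABn (Bn1 t)).
  set (y := fun t => it B (S p) (it AB (bb - 1) t)).
  assert (sy : sinc y) by (intros a b h; unfold y; apply it_sinc; auto; apply it_sinc; auto).
  assert (Hyz : forall t, y (z t) = t).
  { intro t. unfold y, z.
    assert (E : it AB (bb - 1) (ABn (Bn1 t)) = Bn1 t).
    { rewrite <- (it_ext (Phi (gmul alpha beta))). apply Phi_zneg; auto.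
      intro s; apply hm. }
    rewrite E. apply Phi_zneg; auto. }
  assert (Hzy : forall t, z (y t) = t).
  { intro t. apply (sinc_inj y); auto. }
  assert (Hw : forall t, w t = it u e (z t)).
  { intro t. unfold w, W, relW. rewrite !hm.
    replace (- Z.of_nat bb + 1)%Z with (- Z.of_nat (bb - 1))%Z by lia.
    replace (- Z.of_nat n + Z.of_nat k - 1)%Z with (- Z.of_nat (S p))%Z by lia.
    rewrite gzpow_pos, Phi_npow by auto. reflexivity. }
  assert (Hrel : forall t, it w (S m) t = u t).
  { intro t. unfold satisfies_relation in hrel.
    replace (Z.of_nat m + 1)%Z with (Z.of_nat (S m)) in hrel by lia.
    unfold w, u, W. rewrite <- hrel. rewrite gzpow_pos, Phi_npow; auto. }
  assert (Huw : forall t, u (w t) = w (u t)).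
  { intro t. rewrite <- !Hrel. rewrite <- it_Sr. reflexivity. }
  assert (Hzu : forall t, z (u t) = u (z t)).
  { intro t. apply (sinc_inj (it u e)). apply it_sinc; auto.
    rewrite <- Hw, <- Huw, Hw. rewrite <- it_Sr. reflexivity. }
  assert (Hzui : forall i t, z (it u i t) = it u i (z t)).
  { induction i; intro t; simpl; auto. rewrite Hzu, IHi. reflexivity. }
  assert (Hwj : forall j t, it w j t = it u (e * j) (it z j t)).
  { induction j; intro t. simpl. rewrite Nat.mul_0_r. reflexivity.
    simpl (it w (S j) t). rewrite IHj, Hw, Hzui, it_add.
    replace (e * S j)%nat with (e + e * j)%nat by lia. reflexivity. }
  assert (Hzyj : forall j s, it z j (it y j s) = s).
  { induction j; intro s. reflexivity. rewrite it_Sr.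
    change (it y (S j) s) with (y (it y j s)). rewrite Hzy. apply IHj. }
  set (N := (e * S m - 1)%nat).
  assert (Key : forall s, it y (S m) s = it u N s).
  { intro s. apply (sinc_inj u); auto.
    rewrite <- Hrel, Hwj, Hzyj.
    replace (e * S m)%nat with (S N) by lia. reflexivity. }
  set (r := fun t => it B p (it AB (bb - 1) t)).
  assert (Hr : forall t, r t <= it u (e - 1) t).
  { intro t. unfold r. eapply Rle_trans. apply it_le; auto.
    eapply Rle_trans. apply sinc_le. apply it_sinc; auto. apply it_le; auto.
    rewrite it_add. replace (p + (bb - 1))%nat with (e - 1)%nat by lia. right; reflexivity. }
  assert (Hy : forall t, y t <= it u e t).
  { intro t. change (y t) with (B (r t)). eapply Rle_trans. apply HuB.
    eapply Rle_trans. apply sinc_le; [exact su | apply Hr].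
    change (u (it u (e - 1) t)) with (it u (S (e - 1)) t).
    replace (S (e - 1)) with e by lia. right; reflexivity. }
  assert (Hyj : forall j t, it y j t <= it u (e * j) t).
  { intros j t. rewrite <- it_mul. apply it_le; auto. apply it_sinc; auto. }
  assert (Fin : forall s, it u N s <= B (it u N s)).
  { intro s. rewrite <- Key at 1. simpl (it y (S m) s). change (y (it y m s)) with (B (r (it y m s))).
    apply sinc_le; [exact sB|]. eapply Rle_trans. apply Hr.
    eapply Rle_trans. apply sinc_le. apply it_sinc; auto. apply Hyj.
    rewrite it_add. replace (e - 1 + e * m)%nat with N by lia. right; reflexivity. }
  assert (surj : forall y, exists x, u x = y).
  { intro y0. destruct (proj1 hPhi (relU alpha beta n k)) as [_ [_ h]]. apply h. }
  destruct (it_surj u N surj t0) as [s Hs].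
  rewrite <- Hs. apply Rle_ge. apply Fin.
Qed.
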